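(* Under the hypotheses of Theorem 3 (a 2-D Lorentzian foliation with $d(H^\flat)=-d(\tilde H^\flat)$, a Lorentzian foliation adapted frame $(e_0,e_1,e_2,e_3)$ on a starlike open set $U$, and the magnetically dominated force-free field $F=u\,e_2^\flat\wedge e_3^\flat$ on $U$ with kernel tangent to the leaves), if the distribution spanned by $e_2$ and $e_3$ is involutive, then $F$ is a vacuum solution, i.e. its current density vector vanishes.
   Context: $(\mathcal M,g)$ is a 4-dimensional spacetime with metric of signature $(-,+,+,+)$ and Levi-Civita connection $\nabla$. An electromagnetic field is a 2-form $F$ with $dF=0$, with current density vector $j^\nu=-\nabla_\mu F^{\mu\nu}$; force-free means $F(j,\chi)=0$ for all $\chi$; magnetically dominated means $F_{\mu\nu}F^{\mu\nu}>0$; vacuum means $j=0$. A 2-D Lorentzian foliation is a foliation by 2-dimensional submanifolds with Lorentzian induced metric; a Lorentzian foliation adapted frame is an orthonormal frame ($g(e_\mu,e_\nu)=\mathrm{diag}(-1,1,1,1)_{\mu\nu}$) with $e_0,e_1$ spanning the leaves' tangent spaces. $H$, $\tilde H$ are defined by $2H=[-g(\nabla_{e_0}e_0,e_2)+g(\nabla_{e_1}e_1,e_2)]e_2+[-g(\nabla_{e_0}e_0,e_3)+g(\nabla_{e_1}e_1,e_3)]e_3$, $2\tilde H=[-g(\nabla_{e_2}e_2,e_0)-g(\nabla_{e_3}e_3,e_0)]e_0+[g(\nabla_{e_2}e_2,e_1)+g(\nabla_{e_3}e_3,e_1)]e_1$. A distribution is involutive if it is closed under the Lie bracket. *)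

(* Defs.v *)
(* Local-coordinate formalization:
   the starlike open set U is viewed (via a chart) as a subset of R^4,
   tensors are given by their coordinate components. *)
From HB Require Import structures.
From mathcomp Require Import all_boot all_order all_algebra.
From mathcomp Require Import all_classical all_reals all_analysis.
Set Implicit Arguments. Unset Strict Implicit. Unset Printing Implicit Defensive.
Import Order.TTheory GRing.Theory Num.Theory.
Import numFieldNormedType.Exports.
Local Open Scope classical_set_scope.
Local Open Scope ring_scope.

Section Spacetime.
Variable R : realType.

Definition pt := 'rV[R]_4.
(* a vector field: its 4 contravariant components at each point *)
Definition vfield := pt -> 'I_4 -> R.
(* a 1-form: covariant components *)
Definition form1 := pt -> 'I_4 -> R.
Definition tens2 := pt -> 'I_4 -> 'I_4 -> R.

Definition cbasis (i : 'I_4) : pt := \row_(j < 4) (i == j)%:R.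

Definition pd (i : 'I_4) (f : pt -> R) : pt -> R :=
  fun x => derive f x (cbasis i).

Fixpoint Ck (k : nat) (U : set pt) (f : pt -> R) : Prop :=
  match k with
  | 0 => forall x, U x -> {for x, continuous f}
  | k'.+1 => (forall x, U x -> {for x, continuous f}) /\
             forall i, (forall x, U x -> derivable f x (cbasis i)) /\ Ck k' U (pd i f)
  end.

Definition smooth (U : set pt) (f : pt -> R) : Prop := forall k, Ck k U f.

Definition starlike (U : set pt) : Prop :=
  exists2 p, U p & forall x, U x -> forall t : R, 0 <= t <= 1 -> U (p + t *: (x - p)).

Definition metric := pt -> 'M[R]_4.
Definition ginv (g : metric) (x : pt) : 'M[R]_4 := invmx (g x).

Definition christ (g : metric) (x : pt) (k i j : 'I_4) : R :=
  (2%:R)^-1 * \sum_(l < 4) ginv g x k l *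
     (pd i (fun y => g y l j) x + pd j (fun y => g y l i) x - pd l (fun y => g y i j) x).

Definition gdot (g : metric) (x : pt) (X Y : 'I_4 -> R) : R :=
  \sum_(i < 4) \sum_(j < 4) g x i j * X i * Y j.

Definition nabla (g : metric) (X Y : vfield) : vfield := fun x k =>
  \sum_(i < 4) X x i * pd i (fun y => Y y k) x
  + \sum_(i < 4) \sum_(j < 4) christ g x k i j * X x i * Y x j.

Definition lie (X Y : vfield) : vfield := fun x k =>
  \sum_(i < 4) (X x i * pd i (fun y => Y y k) x - Y x i * pd i (fun y => X y k) x).

Definition flat (g : metric) (X : vfield) : form1 := fun x i =>
  \sum_(j < 4) g x i j * X x j.

Definition d1 (a : form1) : tens2 := fun x i j =>
  pd i (fun y => a y j) x - pd j (fun y => a y i) x.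

Definition closed2 (U : set pt) (F : tens2) : Prop :=
  forall x, U x -> forall i j k : 'I_4,
    pd i (fun y => F y j k) x + pd j (fun y => F y k i) x + pd k (fun y => F y i j) x = 0.

Definition wedge (a b : form1) : tens2 := fun x i j => a x i * b x j - a x j * b x i.

Definition raise2 (g : metric) (F : tens2) : tens2 := fun x m n =>
  \sum_(a < 4) \sum_(b < 4) ginv g x m a * ginv g x n b * F x a b.

(* current density j^nu = - nabla_mu F^{mu nu} *)
Definition current (g : metric) (F : tens2) : vfield := fun x n =>
  let G := raise2 g F in
  - (\sum_(m < 4) pd m (fun y => G y m n) x
     + \sum_(m < 4) \sum_(l < 4) christ g x m m l * G x l n
     + \sum_(m < 4) \sum_(l < 4) christ g x n m l * G x m l).

Definition force_free (g : metric) (U : set pt) (F : tens2) : Prop :=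
  forall x, U x -> forall chi : 'I_4 -> R,
    \sum_(a < 4) \sum_(b < 4) F x a b * current g F x a * chi b = 0.

Definition magn_dominated (g : metric) (U : set pt) (F : tens2) : Prop :=
  forall x, U x -> 0 < \sum_(a < 4) \sum_(b < 4) F x a b * raise2 g F x a b.

Definition eta (m n : 'I_4) : R :=
  if m == n then (if m == 0 then -1 else 1) else 0.

Definition orthonormal_frame (g : metric) (U : set pt) (e : 'I_4 -> vfield) : Prop :=
  forall x, U x -> forall m n, gdot g x (e m x) (e n x) = eta m n.

Definition involutive2 (U : set pt) (X Y : vfield) : Prop :=
  forall x, U x -> exists a b : R, forall k, lie X Y x k = a * X x k + b * Y x k.

(* mean curvature type vector fields H and Htilde of the frame *)
Definition Hvec (g : metric) (e : 'I_4 -> vfield) : vfield := fun x k =>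
  (2%:R)^-1 *
  ((- gdot g x (nabla g (e 0) (e 0) x) (e 2%:R x) + gdot g x (nabla g (e 1) (e 1) x) (e 2%:R x))
     * e 2%:R x k
   + (- gdot g x (nabla g (e 0) (e 0) x) (e 3%:R x) + gdot g x (nabla g (e 1) (e 1) x) (e 3%:R x))
     * e 3%:R x k).

Definition Htvec (g : metric) (e : 'I_4 -> vfield) : vfield := fun x k =>
  (2%:R)^-1 *
  ((- gdot g x (nabla g (e 2%:R) (e 2%:R) x) (e 0 x) - gdot g x (nabla g (e 3%:R) (e 3%:R) x) (e 0 x))
     * e 0 x k
   + (gdot g x (nabla g (e 2%:R) (e 2%:R) x) (e 1 x) + gdot g x (nabla g (e 3%:R) (e 3%:R) x) (e 1 x))
     * e 1 x k).

End Spacetime.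

(* Main.v *)
Require Import Defs.
From HB Require Import structures.
From mathcomp Require Import all_boot all_order all_algebra.
From mathcomp Require Import all_classical all_reals all_analysis.
From mathcomp Require Import ring.
Import Order.TTheory GRing.Theory Num.Theory.
Import numFieldNormedType.Exports.
Local Open Scope classical_set_scope.
Local Open Scope ring_scope.

Section H.
Variable R : realType.

Lemma pd_loc (U : set (pt R)) (f h : pt R -> R) i x : open U -> U x ->
  (forall y, U y -> f y = h y) -> pd i f x = pd i h x.
Proof.
move=> oU Ux fh; rewrite /pd; apply: near_eq_derive.
have : \forall y \near x, U y by exact: open_nbhs_nbhs.
by apply: filterS => y /fh.
Qed.

Lemma eta_sq (i j : 'I_4) : \sum_(k < 4) @Defs.eta R i k * @Defs.eta R k j = (i == j)%:R.
Proof.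
rewrite (bigD1 i) //= big1 ?addr0; last first.
  by move=> k /negbTE ki; rewrite /Defs.eta eq_sym ki mul0r.
rewrite /Defs.eta eqxx; case: (i == j); last by rewrite mulr0.
by case: ifP => _; rewrite ?mulrNN mulr1.
Qed.

Lemma g_unit (g : metric R) (e : 'I_4 -> vfield R) y :
  (forall m n, gdot g y (e m y) (e n y) = @Defs.eta R m n) -> g y \in unitmx.
Proof.
move=> on.
pose E : 'M[R]_4 := \matrix_(i, m) e m y i.
pose Et : 'M[R]_4 := \matrix_(m, n) @Defs.eta R m n.
have hM : E^T *m g y *m E = Et.
  apply/matrixP => m n; rewrite !mxE -on /gdot.
  under eq_bigr do rewrite !mxE big_distrl /=.
  rewrite exchange_big /=; apply: eq_bigr => i _; apply: eq_bigr => k _.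
  by rewrite !mxE [e m y i * _]mulrC.
have hE : Et *m Et = 1%:M.
  by apply/matrixP => i j; rewrite !mxE; under eq_bigr do rewrite !mxE; rewrite eta_sq.
have : (E^T *m g y *m E) *m Et = 1%:M by rewrite hM.
move=> /mulmx1_unit [].
by rewrite !unitmx_mul => /andP[/andP[_ ->]].
Qed.

Lemma raise_flat (g : metric R) y (X : vfield R) m : g y \in unitmx ->
  \sum_(a < 4) ginv g y m a * flat g X y a = X y m.
Proof.
move=> gu; rewrite /flat.
under eq_bigr do rewrite big_distrr.
rewrite exchange_big /=.
transitivity (\sum_(j < 4) (invmx (g y) *m g y) m j * X y j).
  apply: eq_bigr => j _; rewrite mxE big_distrl; apply: eq_bigr => a _.
  by rewrite /ginv mulrA.
rewrite mulVmx //; rewrite (bigD1 m) //= big1 ?addr0.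
  by rewrite mxE eqxx mul1r.
by move=> j /negbTE jm; rewrite mxE eq_sym jm mul0r.
Qed.

Lemma raise2_F (g : metric R) y (A B : vfield R) (u : pt R -> R) m n :
  g y \in unitmx ->
  raise2 g (fun x i j => u x * wedge (flat g A) (flat g B) x i j) y m n =
  u y * (A y m * B y n - B y m * A y n).
Proof.
move=> gu; rewrite /raise2 /wedge.
rewrite -(raise_flat g y A m gu) -(raise_flat g y B n gu) -(raise_flat g y B m gu) -(raise_flat g y A n gu).
rewrite !big_distrlr /= -sumrB mulr_sumr; apply: eq_bigr => a _.
rewrite -sumrB mulr_sumr; apply: eq_bigr => b _.
ring.
Qed.

Lemma christ_sym (g : metric R) (U : set (pt R)) x k i j : open U -> U x ->
  (forall y, U y -> (g y)^T = g y) -> christ g x k i j = christ g x k j i.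
Proof.
move=> oU Ux sym; rewrite /christ; congr (_ * _); apply: eq_bigr => l _.
rewrite (@pd_loc U (fun y => g y i j) (fun y => g y j i)) //; last first.
  by move=> y Uy; have := congr1 (fun M : 'M[R]_4 => M j i) (sym y Uy); rewrite mxE.
by rewrite [pd i _ _ + _]addrC.
Qed.

Lemma pdM (f h : pt R -> R) i x : derivable f x (cbasis R i) -> derivable h x (cbasis R i) ->
  pd i (fun y => f y * h y) x = f x * pd i h x + h x * pd i f x.
Proof. by move=> df dh; rewrite /pd (deriveM df dh). Qed.

Lemma pdB (f h : pt R -> R) i x : derivable f x (cbasis R i) -> derivable h x (cbasis R i) ->
  pd i (fun y => f y - h y) x = pd i f x - pd i h x.
Proof. by move=> df dh; rewrite /pd (deriveB df dh). Qed.

Lemma derM (f h : pt R -> R) i x : derivable f x (cbasis R i) -> derivable h x (cbasis R i) ->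
  derivable (fun y => f y * h y) x (cbasis R i).
Proof. by move=> df dh; exact: (derivableM df dh). Qed.

Lemma gdot_lin (g : metric R) x (X Y Z : 'I_4 -> R) a b :
  gdot g x (fun k => a * X k + b * Y k) Z = a * gdot g x X Z + b * gdot g x Y Z.
Proof.
rewrite /gdot !mulr_sumr -big_split; apply: eq_bigr => i _.
rewrite !mulr_sumr -big_split; apply: eq_bigr => j _ /=. ring.
Qed.
End H.


Theorem corollary1 (R : realType) (U : set (pt R)) (g : metric R)
  (e : 'I_4 -> vfield R) (u : pt R -> R) :
  open U -> starlike U ->
  (* smooth symmetric metric on U *)
  (forall i j : 'I_4, smooth U (fun x => g x i j)) ->
  (forall x, U x -> (g x)^T = g x) ->
  (* smooth orthonormal frame *)
  (forall m k : 'I_4, smooth U (fun x => e m x k)) ->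
  orthonormal_frame g U e ->
  (* e_0, e_1 span the tangent spaces of the leaves of a 2-D foliation *)
  involutive2 U (e 0) (e 1) ->
  (* d(H^flat) = - d(Htilde^flat) *)
  (forall x, U x -> forall i j : 'I_4,
     d1 (flat g (Hvec g e)) x i j = - d1 (flat g (Htvec g e)) x i j) ->
  (* F = u e_2^flat /\ e_3^flat, closed, force-free, magnetically dominated *)
  smooth U u ->
  let F := fun x i j => u x * wedge (flat g (e 2%:R)) (flat g (e 3%:R)) x i j in
  closed2 U F ->
  force_free g U F ->
  magn_dominated g U F ->
  (* kernel of F tangent to the leaves *)
  (forall x, U x -> forall X : 'I_4 -> R,
     (forall Y : 'I_4 -> R, \sum_(a < 4) \sum_(b < 4) F x a b * X a * Y b = 0) ->
     exists a b : R, forall k, X k = a * e 0 x k + b * e 1 x k) ->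
  (* the distribution spanned by e_2, e_3 is involutive *)
  involutive2 U (e 2%:R) (e 3%:R) ->
  forall x, U x -> forall n : 'I_4, current g F x n = 0.

Proof.
move=> oU sU gs gsym es on inv01 dH us F cF ff md ker inv23 x Ux.
have gu : forall y, U y -> g y \in unitmx.
  by move=> y Uy; exact: g_unit (on y Uy).
pose e2 := e 2%:R; pose e3 := e 3%:R.
have hG : forall y, U y -> forall m k,
    raise2 g F y m k = u y * (e2 y m * e3 y k - e3 y m * e2 y k).
  by move=> y Uy m k; rewrite /F raise2_F //; exact: gu.
have de : forall m k i, derivable (fun y => e m y k) x (cbasis R i).
  by move=> m k i; exact: ((es m k 1%N).2 i).1 x Ux.
have du : forall i, derivable u x (cbasis R i).
  by move=> i; exact: ((us 1%N).2 i).1 x Ux.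
pose ud2 m := pd m (fun y => u y * e2 y m) x.
pose ud3 m := pd m (fun y => u y * e3 y m) x.
pose A := \sum_(m < 4) ud2 m + \sum_(m < 4) \sum_(l < 4) christ g x m m l * (u x * e2 x l).
pose B := \sum_(m < 4) ud3 m + \sum_(m < 4) \sum_(l < 4) christ g x m m l * (u x * e3 x l).
have hcur : forall n, current g F x n = B * e2 x n - A * e3 x n - u x * lie e2 e3 x n.
move=> n.
have hP : forall m, pd m (fun y => raise2 g F y m n) x =
   ud2 m * e3 x n - ud3 m * e2 x n
   + u x * (e2 x m * pd m (fun y => e3 y n) x - e3 x m * pd m (fun y => e2 y n) x).
  move=> m.
  rewrite (@pd_loc _ U _ (fun y => (u y * e2 y m) * e3 y n - (u y * e3 y m) * e2 y n)) //; last first.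
    by move=> y Uy; rewrite hG //; ring.
  have d2 : forall j, derivable (fun y => u y * e2 y j) x (cbasis R m).
    by move=> j; apply: derM; [exact: du | exact: de].
  have d3 : forall j, derivable (fun y => u y * e3 y j) x (cbasis R m).
    by move=> j; apply: derM; [exact: du | exact: de].
  rewrite (@pdB _ (fun y => u y * e2 y m * e3 y n) (fun y => u y * e3 y m * e2 y n)); last first.
    by apply: (@derM _ (fun y => u y * e3 y m)); [exact: d3 | exact: de].
    by apply: (@derM _ (fun y => u y * e2 y m)); [exact: d2 | exact: de].
  rewrite (@pdM _ (fun y => u y * e3 y m)) //; last exact: de.
  rewrite (@pdM _ (fun y => u y * e2 y m)) //; last exact: de.
  rewrite /ud2 /ud3; ring.
have h3 : \sum_(m < 4) \sum_(l < 4) christ g x n m l * raise2 g F x m l = 0.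
  under eq_bigr do under eq_bigr do rewrite hG //.
  set S := (X in X = 0).
  have : S = - S.
    rewrite {1}/S exchange_big /S -sumrN; apply: eq_bigr => m _.
    rewrite -sumrN; apply: eq_bigr => l _.
    rewrite (christ_sym _ _ _ _ _ _ _ oU Ux gsym); ring.
  move/eqP; rewrite -subr_eq0 opprK -mulr2n -mulr_natr mulf_eq0 => /orP[/eqP //|].
  by rewrite pnatr_eq0.
rewrite /current /=.
under eq_bigr do rewrite hP.
under [X in _ + X + _]eq_bigr do under eq_bigr do rewrite hG //.
rewrite h3 addr0.
have E1 : \sum_(m < 4) (ud2 m * e3 x n - ud3 m * e2 x n
   + u x * (e2 x m * pd m (fun y => e3 y n) x - e3 x m * pd m (fun y => e2 y n) x))
   = (\sum_(m < 4) ud2 m) * e3 x n - (\sum_(m < 4) ud3 m) * e2 x n + u x * lie e2 e3 x n.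
  rewrite /lie !big_distrl /= mulr_sumr -sumrB -!big_split /=.
  by apply: eq_bigr => m _; ring.
have E2 : \sum_(m < 4) \sum_(l < 4) christ g x m m l * (u x * (e2 x l * e3 x n - e3 x l * e2 x n))
   = (\sum_(m < 4) \sum_(l < 4) christ g x m m l * (u x * e2 x l)) * e3 x n
   - (\sum_(m < 4) \sum_(l < 4) christ g x m m l * (u x * e3 x l)) * e2 x n.
  rewrite !big_distrl -sumrB; apply: eq_bigr => m _.
  rewrite !big_distrl -sumrB; apply: eq_bigr => l _ /=; ring.
rewrite E1 E2 /A /B; ring.
have [c [d hcd]] := ker x Ux (current g F x) (fun Y => ff x Ux Y).
have [a [b hab]] := inv23 x Ux.
pose p := B - u x * a; pose q := - A - u x * b.
have hpq : forall k, current g F x k = p * e2 x k + q * e3 x k.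
  move=> k; rewrite hcur hab /p /q. rewrite /e2 /e3; ring.
have p0 : p = 0.
  have h1 : gdot g x (current g F x) (e2 x) = p.
    rewrite (funext hpq) gdot_lin !on // /Defs.eta /=; ring.
  have h2 : gdot g x (current g F x) (e2 x) = 0.
    rewrite (funext hcd) gdot_lin !on // /Defs.eta /=; ring.
  by rewrite -h1 h2.
have q0 : q = 0.
  have h1 : gdot g x (current g F x) (e3 x) = q.
    rewrite (funext hpq) gdot_lin !on // /Defs.eta /=; ring.
  have h2 : gdot g x (current g F x) (e3 x) = 0.
    rewrite (funext hcd) gdot_lin !on // /Defs.eta /=; ring.
  by rewrite -h1 h2.
by move=> n; rewrite hpq p0 q0 !mul0r addr0.
Qed.
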